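(* Let $L$ be a subspace of $\bigwedge^{k}V$ and let $I\subseteq[n]$. Consider the procedure: while there exists a pair $i<j$ in $I$ with $N_{j\to i}L\neq L$, choose among all such ordered pairs $(j,i)$ the lexicographically last one, and replace $L$ by $N_{j\to i}L$. Then this procedure terminates after at most $|I|-1+\binom{|I|}{2}$ iterations.
   Context: $\mathbb{F}$ is a field (assumed throughout the paper, for expository purposes, to have characteristic not $2$), $V$ is an $n$-dimensional $\mathbb{F}$-vector space with a fixed basis $e_1,\dots,e_n$, and $\bigwedge V=\bigoplus_k\bigwedge^kV$ is its exterior algebra, with monomial basis $e_S=e_{s_1}\wedge\cdots\wedge e_{s_k}$, $S=\{s_1<\cdots<s_k\}\subseteq[n]$, of $\bigwedge^kV$. For $j\in[n]$, $V^{(j)}$ is the span of $\{e_h:h\neq j\}$. Slow shift: for distinct $i,j\in[n]$ and nonzero $m\in\bigwedge^kV$, write uniquely $m=x+e_j\wedge y$ with $x\in\bigwedge^kV^{(j)}$, $y\in\bigwedge^{k-1}V^{(j)}$, and set $N_{j\to i}m=x+e_i\wedge y$ if this is nonzero, and $N_{j\to i}m=e_j\wedge y$ otherwise (this is the limit as $t\to0$ of the projective action of the linear map $e_j\mapsto e_i+te_j$ fixing the other $e_h$). For a subspace $L$ of $\bigwedge^kV$, $N_{j\to i}L$ is the span of $\{N_{j\to i}m:m\in L\setminus\{0\}\}$; it has the same dimension as $L$. The lexicographic order on ordered pairs $(j,i)$ is based on the usual order on $[n]$. *)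

(* Defs.v *)
From HB Require Import structures.
From mathcomp Require Import all_boot all_order all_algebra.
Set Implicit Arguments. Unset Strict Implicit. Unset Printing Implicit Defensive.
Import Order.TTheory GRing.Theory Num.Theory.
Local Open Scope ring_scope.

(* The exterior algebra /\ V of V = F^n (basis e_0..e_{n-1}, indices 'I_n),
   represented by its coordinates in the monomial basis e_S, S ⊆ [n]. *)
Definition ext (F : fieldType) (n : nat) := {ffun {set 'I_n} -> F^o}.

Section Exterior.
Variables (F : fieldType) (n : nat).
Local Notation W := (ext F n).

Definition emon (S : {set 'I_n}) : W := [ffun T => (T == S)%:R].
Definition evec (i : 'I_n) : W := emon [set i].

(* sign of e_S /\ e_T = sign * e_(S ∪ T) for disjoint S, T:
   (-1)^(number of pairs (s,t) in S x T with s > t) *)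
Definition wsign (S T : {set 'I_n}) : F :=
  (-1) ^+ #|[set p in setX S T | (p.2 < p.1)%N]|.

Definition wedge (a b : W) : W :=
  [ffun U => \sum_(S : {set 'I_n}) \sum_(T : {set 'I_n})
      if [&& [disjoint S & T] & S :|: T == U] then wsign S T * a S * b T else 0].

Definition homog (k : nat) (m : W) : Prop := forall S, m S != 0 -> #|S| = k.
(* m lies in /\ V^(j), V^(j) = span{e_h : h != j} *)
Definition avoids (j : 'I_n) (m : W) : Prop := forall S, m S != 0 -> j \notin S.

(* The decomposition m = x + e_j /\ y with x, y in /\ V^(j) (unique) *)
Definition xpart (j : 'I_n) (m : W) : W := [ffun S : {set 'I_n} => if j \in S then 0 else m S].
Definition ypart (j : 'I_n) (m : W) : W :=
  [ffun T : {set 'I_n} => if j \in T then 0 else wsign [set j] T * m (j |: T)].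

Definition slow_shift (j i : 'I_n) (m : W) : W :=
  let v := xpart j m + wedge (evec i) (ypart j m) in
  if v != 0 then v else wedge (evec j) (ypart j m).

Definition is_span (P : W -> Prop) (U : {vspace W}) : Prop :=
  (forall v, P v -> v \in U) /\
  (forall U' : {vspace W}, (forall v, P v -> v \in U') -> (U <= U')%VS).

Definition is_shift_sp (j i : 'I_n) (L L' : {vspace W}) : Prop :=
  is_span (fun v => exists m : W, [/\ m \in L, m != 0 & v = slow_shift j i m]) L'.

Definition shift_moves (j i : 'I_n) (L : {vspace W}) : Prop := ~ is_shift_sp j i L L.

Definition lex_lt (p q : 'I_n * 'I_n) : bool :=
  (p.1 < q.1)%N || ((p.1 == q.1) && (p.2 < q.2)%N).

Definition proc_step (I : {set 'I_n}) (L L' : {vspace W}) : Prop :=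
  exists i j : 'I_n,
    [/\ [&& i \in I, j \in I & (i < j)%N], shift_moves j i L,
        (forall i' j' : 'I_n, i' \in I -> j' \in I -> (i' < j')%N ->
           lex_lt (j, i) (j', i') -> ~ shift_moves j' i' L)
      & is_shift_sp j i L L'].

End Exterior.

(* Main.v *)
Require Import Defs.
From HB Require Import structures.
From mathcomp Require Import all_boot all_order all_algebra ring zify.
Set Implicit Arguments. Unset Strict Implicit. Unset Printing Implicit Defensive.
Import Order.TTheory GRing.Theory Num.Theory.
Local Open Scope ring_scope.

Section Ops.
Variables (F : fieldType) (n : nat).
Local Notation W := (ext F n).
Implicit Types (a b c d x y : 'I_n) (R T U S I : {set 'I_n}) (v w m u k : W) (L : {vspace W}).

Definition csg x T : F := wsign F [set x] T.

Lemma csgE x T : csg x T = (-1) ^+ #|[set t in T | (t < x)%N]|.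
Proof.
rewrite /csg /wsign; congr (_ ^+ _).
have -> : [set p in setX [set x] T | (p.2 < p.1)%N] = [set (x, t) | t in [set t in T | (t < x)%N]].
  apply/setP => -[p q]; rewrite !inE /=; apply/andP/imsetP => [[/andP[/eqP -> qT] lt]|[t]].
    by exists q => //; rewrite inE qT.
  by rewrite inE => /andP[tT lt] [-> ->]; rewrite eqxx tT.
by rewrite card_imset // => u v [].
Qed.

Lemma csg2 x T : csg x T * csg x T = 1.
Proof. by rewrite csgE -expr2 sqrr_sign. Qed.

Lemma csgU x y T : y \notin T -> csg x (y |: T) = (-1) ^+ (y < x)%N * csg x T.
Proof.
move=> yT; rewrite !csgE -exprD; congr (_ ^+ _).
case lt: (y < x)%N.
  have -> : [set t in y |: T | (t < x)%N] = y |: [set t in T | (t < x)%N].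
    by apply/setP => t; rewrite !inE; case: eqP => // ->; rewrite lt.
  by rewrite cardsU1 inE (negbTE yT).
rewrite add0n; apply: eq_card => t; rewrite !inE; case: eqP => [->|]; by rewrite ?lt ?andbF.
Qed.

Definition Pm a v : W := [ffun S : {set 'I_n} => if a \in S then 0 else v S].
Definition Qm a v : W := [ffun S : {set 'I_n} => if a \in S then v S else 0].
Definition Dm a b v : W := [ffun U : {set 'I_n} => if (b \in U) && (a \notin U :\ b)
   then csg b (U :\ b) * csg a (U :\ b) * v (a |: (U :\ b)) else 0].

Lemma wedge_evec x w : wedge (evec F x) w =
   [ffun U : {set 'I_n} => if x \in U then csg x (U :\ x) * w (U :\ x) else 0].
Proof.
apply/ffunP => U; rewrite !ffunE.
have E : forall S : {set 'I_n}, \sum_(T : {set 'I_n})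
   (if [disjoint S & T] && (S :|: T == U) then wsign F S T * evec F x S * w T else 0)
   = if S == [set x] then \sum_(T : {set 'I_n})
   (if [disjoint [set x] & T] && ([set x] :|: T == U) then wsign F [set x] T * w T else 0) else 0.
  move=> S; rewrite /evec /emon; case: eqP => [->|SX].
    by apply: eq_bigr => T _; rewrite ffunE eqxx mulr1.
  apply: big1 => T _; rewrite ffunE; have -> : (S == [set x])%:R = 0 :> F^o by case: eqP.
  by rewrite mulr0 mul0r; case: ifP.
rewrite (eq_bigr _ (fun S _ => E S)) -big_mkcond big_pred1_eq.
case: (boolP (x \in U)) => xU.
  rewrite (bigD1 (U :\ x)) //= big1 ?addr0.
    by rewrite disjoints1 setD11 setD1K // eqxx.
  move=> T TU; case: ifP => // /andP[dis /eqP UE]; case/eqP: TU.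
  by rewrite -UE setU1K // -disjoints1.
apply: big1 => T _; case: ifP => // /andP[_ /eqP UE].
by case/negP: xU; rewrite -UE setU11.
Qed.

Lemma xpartE a v : xpart a v = Pm a v. Proof. by []. Qed.

Lemma ypart_Dm a b v : wedge (evec F b) (ypart a v) = Dm a b v.
Proof.
rewrite wedge_evec; apply/ffunP => U; rewrite !ffunE.
case: (b \in U) => //=.
by case: (a \in U :\ b) => /=; rewrite ?mulr0 // mulrA.
Qed.

Lemma ypart_Qm a v : wedge (evec F a) (ypart a v) = Qm a v.
Proof.
rewrite wedge_evec; apply/ffunP => U; rewrite !ffunE.
case: ifP => aU //; rewrite setD11 mulrA csg2 mul1r setD1K //.
Qed.


Definition Phi a b v : W := Pm a v + Dm a b v.

Lemma slow_shiftE j i m : slow_shift j i m = if Phi j i m != 0 then Phi j i m else Qm j m.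
Proof. by rewrite /slow_shift xpartE ypart_Dm ypart_Qm. Qed.

Lemma DmE a b v U : a != b -> Dm a b v U =
  if (b \in U) && (a \notin U) then csg b (U :\ b) * csg a (U :\ b) * v (a |: (U :\ b)) else 0.
Proof. by move=> ab; rewrite ffunE in_setD1 ab. Qed.

Lemma Pm_lin a : linear (Pm a).
Proof. by move=> k u w; apply/ffunP => S; rewrite !ffunE; case: ifP; rewrite ?scaler0 ?addr0. Qed.
Lemma Qm_lin a : linear (Qm a).
Proof. by move=> k u w; apply/ffunP => S; rewrite !ffunE; case: ifP; rewrite ?scaler0 ?addr0. Qed.
Lemma Dm_lin a b : linear (Dm a b).
Proof.
move=> k u w; apply/ffunP => S; rewrite !ffunE; case: ifP; rewrite ?scaler0 ?addr0 //.
move=> _; rewrite mulrDr; congr (_ + _); exact: mulrCA.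
Qed.
Lemma Phi_lin a b : linear (Phi a b).
Proof. by move=> k u w; rewrite /Phi (Pm_lin a) (Dm_lin a b) scalerDr addrACA. Qed.

HB.instance Definition _ a := GRing.isLinear.Build F W W *:%R (Pm a) (Pm_lin a).
HB.instance Definition _ a := GRing.isLinear.Build F W W *:%R (Qm a) (Qm_lin a).
HB.instance Definition _ a b := GRing.isLinear.Build F W W *:%R (Dm a b) (Dm_lin a b).
HB.instance Definition _ a b := GRing.isLinear.Build F W W *:%R (Phi a b) (Phi_lin a b).

Lemma PQ a v : Pm a v + Qm a v = v.
Proof. by apply/ffunP => S; rewrite !ffunE; case: ifP; rewrite ?add0r ?addr0. Qed.
Lemma QmE a v : Qm a v = v - Pm a v.
Proof. by rewrite -{2}(PQ a v) addrAC subrr add0r. Qed.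

Definition av a w := forall S, a \in S -> w S = 0.

Lemma av_Pm a v : av a (Pm a v). Proof. by move=> S aS; rewrite ffunE aS. Qed.
Lemma av_Dm a b v : a != b -> av a (Dm a b v).
Proof. by move=> ab S aS; rewrite DmE // aS andbF. Qed.
Lemma av_Phi a b v : a != b -> av a (Phi a b v).
Proof. by move=> ab S aS; rewrite ffunE av_Pm // av_Dm // addr0. Qed.
Lemma avD a u w : av a u -> av a w -> av a (u + w).
Proof. by move=> hu hw S aS; rewrite ffunE hu // hw // addr0. Qed.
Lemma avN a u : av a u -> av a (- u).
Proof. by move=> hu S aS; rewrite ffunE hu // oppr0. Qed.

Lemma Pm_av a w : av a w -> Pm a w = w.
Proof. by move=> h; apply/ffunP => S; rewrite ffunE; case: ifP => // /h ->. Qed.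
Lemma Qm_av a w : av a w -> Qm a w = 0.
Proof. by move=> h; apply/ffunP => S; rewrite !ffunE; case: ifP => // /h ->. Qed.
Lemma Dm_av a b w : av a w -> Dm a b w = 0.
Proof. by move=> h; apply/ffunP => S; rewrite !ffunE; case: ifP => // _; rewrite h ?mulr0 // setU11. Qed.
Lemma Phi_av a b w : av a w -> Phi a b w = w.
Proof. by move=> h; rewrite /Phi Pm_av // Dm_av // addr0. Qed.

Lemma Dm_Qm a b v : Dm a b (Qm a v) = Dm a b v.
Proof. by rewrite QmE linearB /= [Dm a b (Pm a v)]Dm_av ?subr0 //; apply: av_Pm. Qed.
Lemma Phi_Qm a b v : Phi a b (Qm a v) = Dm a b v.
Proof. by rewrite /Phi Dm_Qm QmE linearB /= [Pm a (Pm a v)]Pm_av ?subrr ?add0r //; apply: av_Pm. Qed.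
Lemma Qm_Phi a b v : a != b -> Qm a (Phi a b v) = 0.
Proof. by move=> ab; apply: Qm_av; apply: av_Phi. Qed.
Lemma Pm_Phi a b v : a != b -> Pm a (Phi a b v) = Phi a b v.
Proof. by move=> ab; apply: Pm_av; apply: av_Phi. Qed.
Lemma Pm_Qm a v : Pm a (Qm a v) = 0.
Proof. by apply/ffunP => S; rewrite !ffunE; case: ifP => // ->. Qed.
Lemma Phi_Phi a b v : a != b -> Phi a b (Phi a b v) = Phi a b v.
Proof. by move=> ab; apply: Phi_av; apply: av_Phi. Qed.

Definition hasb b w := forall S, b \notin S -> w S = 0.
Lemma hasb_Dm a b v : hasb b (Dm a b v).
Proof. by move=> S bS; rewrite ffunE (negbTE bS). Qed.
Lemma hasb_Qm a v : hasb a (Qm a v).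
Proof. by move=> S bS; rewrite ffunE (negbTE bS). Qed.
Lemma Dm_hasb c b w : c != b -> hasb b w -> Dm c b w = 0.
Proof.
move=> cb h; apply/ffunP => S; rewrite !ffunE; case: ifP => // _.
by rewrite h ?mulr0 // !inE negb_or negb_and eq_sym cb negbK eqxx.
Qed.
Lemma Pm_hasb a w : hasb a w -> Pm a w = 0.
Proof. by move=> h; apply/ffunP => S; rewrite !ffunE; case: ifP => // /negbT /h. Qed.

Lemma Pm_Pm a c v : Pm a (Pm c v) = Pm c (Pm a v).
Proof. by apply/ffunP => S; rewrite !ffunE; do 2 case: ifP. Qed.
Lemma Pm_Dm c a b v : c != a -> c != b -> Pm c (Dm a b v) = Dm a b (Pm c v).
Proof.
move=> ca cb; apply/ffunP => S; rewrite !ffunE !inE (negbTE ca) (negbTE cb) /=.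
by case: (c \in S); case: ifP; rewrite ?mulr0.
Qed.
Lemma Pm_Dm0 j b v : j != b -> Dm j b (Pm j v) = 0.
Proof. by move=> jb; apply: Dm_av; apply: av_Pm. Qed.

Lemma HU2 y x R : x != y -> x \notin R -> (y |: (x |: R)) :\ x = y |: R.
Proof. by move=> xy xR; rewrite setUCA setU1K // !inE negb_or xR andbT. Qed.

Lemma sgrev x y : x != y -> (y < x)%N = ~~ (x < y)%N.
Proof.
move=> xy; case: (ltngtP x y) => // e.
by case/eqP: xy; apply: val_inj.
Qed.

Lemma sq_ring (s1 s2 s3 s4 x y z w : F) : s2 * s2 = 1 -> s4 * s4 = 1 ->
  - s1 * x * - s2 * y * s2 * z * s3 * w = s1 * z * s4 * w * - s4 * x * - s3 * y.
Proof.
move=> h2 h4.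
have -> : - s1 * x * - s2 * y * s2 * z * s3 * w = (s2 * s2) * (s1 * x * y * z * s3 * w) by ring.
have -> : s1 * z * s4 * w * - s4 * x * - s3 * y = (s4 * s4) * (s1 * x * y * z * s3 * w) by ring.
by rewrite h2 h4.
Qed.

Lemma Dm_Dm_comm a b c d v : a != b -> a != c -> a != d -> b != c -> b != d -> c != d ->
  Dm a b (Dm c d v) = Dm c d (Dm a b v).
Proof.
move=> ab ac ad bc bd cd; apply/ffunP => U.
have ba := ab; have ca := ac; have da := ad; have cb := bc; have db := bd; have dc := cd.
rewrite eq_sym in ba; rewrite eq_sym in ca; rewrite eq_sym in da.
rewrite eq_sym in cb; rewrite eq_sym in db; rewrite eq_sym in dc.
rewrite !DmE // !inE ?(negbTE ab, negbTE ac, negbTE ad, negbTE bc, negbTE bd, negbTE cd,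
  negbTE ba, negbTE ca, negbTE da, negbTE cb, negbTE db, negbTE dc) /=.
case bU: (b \in U); case aU: (a \in U); case dU: (d \in U); case cU: (c \in U); rewrite /= ?mulr0 //.
have [R [UE bR dR]] : exists R, [/\ U = b |: (d |: R), b \notin R & d \notin R].
  exists (U :\ b :\ d); rewrite !inE !eqxx andbF; split => //.
  by rewrite setD1K ?setD1K // !inE eq_sym bd.
have aR : a \notin R by apply: contraFN aU; rewrite UE !inE => ->; rewrite !orbT.
have cR : c \notin R by apply: contraFN cU; rewrite UE !inE => ->; rewrite !orbT.
have dbR : d \notin b |: R by rewrite !inE negb_or eq_sym bd.
have bdR : b \notin d |: R by rewrite !inE negb_or bd.
rewrite UE (setU1K bdR) (HU2 db dR) (HU2 da dR) (HU2 bc bR).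
rewrite [a |: (c |: R)]setUCA.
rewrite !csgU ?inE ?negb_or ?aR ?cR ?bR ?dR ?(eq_sym b) ?(eq_sym d) ?ab ?ad ?bd ?cd ?(eq_sym c) ?bc ?ac //.
rewrite (sgrev bd) (sgrev ad) (sgrev ac) (sgrev bc) !signrN.
rewrite !mulrA; congr (_ * _).
set s1 := (-1) ^+ (b < d)%N; set s2 := (-1) ^+ (a < d)%N; set s3 := (-1) ^+ (a < c)%N; set s4 := (-1) ^+ (b < c)%N.
by apply: sq_ring; rewrite -expr2 sqrr_sign.
Qed.

Lemma S2ring (x y z V : F) : x * x = 1 ->
  (-1) ^+ 1 * x * ((-1) ^+ 1 * y) * ((-1) ^+ 0 * z * ((-1) ^+ 0 * x) * V) =
  - ((-1) ^+ 0 * z * ((-1) ^+ 1 * y) * V).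
Proof.
move=> h; rewrite expr1 expr0.
have -> : -1 * x * (-1 * y) * (1 * z * (1 * x) * V) = (x * x) * (y * z * V) by ring.
rewrite h; ring.
Qed.

Lemma Dm_Dm_S2 (i j j' : 'I_n) v : (i < j)%N -> (j < j')%N ->
  Dm j' j (Dm j i v) = - Qm j (Dm j' i v).
Proof.
move=> lij ljj'.
have ji : j != i by apply/eqP => e; rewrite e ltnn in lij.
have j'j : j' != j by apply/eqP => e; rewrite e ltnn in ljj'.
have j'i : j' != i by apply/eqP => e; rewrite e in ljj'; move: (ltn_trans lij ljj'); rewrite ltnn.
have ij := ji; have jj' := j'j; have ij' := j'i.
rewrite eq_sym in ij; rewrite eq_sym in jj'; rewrite eq_sym in ij'.
apply/ffunP => U.
have -> : (- Qm j (Dm j' i v)) U = - (if j \in U then Dm j' i v U else 0) by rewrite !ffunE.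
rewrite !DmE // !inE ?(negbTE ji, negbTE j'j, negbTE j'i, negbTE ij, negbTE jj', negbTE ij') /=.
case jU: (j \in U); case iU: (i \in U); case j'U: (j' \in U); rewrite /= ?mulr0 ?oppr0 //.
have [R [UE iR jR]] : exists R, [/\ U = i |: (j |: R), i \notin R & j \notin R].
  exists (U :\ i :\ j); rewrite !inE !eqxx andbF; split => //.
  by rewrite setD1K ?setD1K // !inE eq_sym ij.
have j'R : j' \notin R by apply: contraFN j'U; rewrite UE !inE => ->; rewrite !orbT.
have ijR : i \notin j |: R by rewrite !inE negb_or ij.
rewrite UE (HU2 ji jR) (HU2 ij' iR) (setU1K ijR) [j' |: (j |: R)]setUCA.
rewrite !csgU ?inE ?negb_or ?iR ?jR ?j'R ?ij ?ji ?jj' ?j'j ?ij' ?j'i //.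
rewrite lij (ltn_trans lij ljj') ljj' ltnNge (ltnW (ltn_trans lij ljj')) ltnNge (ltnW ljj') ltnNge (ltnW lij) /= eqxx /=.
by apply: S2ring; rewrite csg2.
Qed.

Lemma S3ring (a b c V : F) : b * b = 1 -> a * b * (b * c * V) = a * c * V.
Proof.
move=> h; have -> : a * b * (b * c * V) = (b * b) * (a * c * V) by ring.
by rewrite h mul1r.
Qed.

Lemma Dm_Dm_S3 (i j j' : 'I_n) w : i != j -> j' != j -> j' != i ->
  Dm j i (Dm j' j w) = Pm j (Dm j' i w).
Proof.
move=> ij j'j j'i; have ji := ij; rewrite eq_sym in ji.
apply/ffunP => U.
have -> : Pm j (Dm j' i w) U = if j \in U then 0 else Dm j' i w U by rewrite ffunE.
rewrite !DmE // !inE eqxx /=.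
case jU: (j \in U); case iU: (i \in U); rewrite /= ?mulr0 //.
have jUi : j \notin U :\ i by rewrite !inE jU andbF.
rewrite setU1K // (negbTE j'j) j'i /=.
case: (j' \in U); rewrite /= ?mulr0 //.
by apply: S3ring; rewrite csg2.
Qed.

Lemma Qm_hasb a w : hasb a w -> Qm a w = w.
Proof. by move=> h; apply/ffunP => S; rewrite ffunE; case: ifP => // /negbT /h ->. Qed.

Definition PC (f : W -> W) (L : {vspace W}) := forall v, v \in L -> f v \in L.

Definition NL j i (L : {vspace W}) : {vspace W} :=
  (linfun (Phi j i) @: L + linfun (Qm j) @: (L :&: lker (linfun (Phi j i))))%VS.

Lemma memNL j i L v : v \in NL j i L <->
  exists u k, [/\ u \in L, k \in L, Phi j i k = 0 & v = Phi j i u + Qm j k].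
Proof.
split.
  case/memv_addP => x /memv_imgP [a aL ->] [y /memv_imgP [k /memv_capP [kL]]].
  rewrite memv_ker lfunE /= => /eqP k0 -> ->.
  by exists a, k; rewrite !lfunE.
case=> a [k [aL kL k0 ->]]; apply: memv_add.
  by rewrite -[Phi j i a](lfunE (Phi j i)); apply: memv_img.
rewrite -[Qm j k](lfunE (Qm j)); apply: memv_img.
by rewrite memv_cap kL memv_ker lfunE /= k0 eqxx.
Qed.

Lemma NL_Phi j i L u : u \in L -> Phi j i u \in NL j i L.
Proof. by move=> aL; apply/memNL; exists u, 0; split; rewrite ?mem0v ?linear0 ?addr0. Qed.

Lemma NL_Qm j i L k : k \in L -> Phi j i k = 0 -> Qm j k \in NL j i L.
Proof. by move=> kL k0; apply/memNL; exists 0, k; split; rewrite ?mem0v ?linear0 ?add0r. Qed.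

Lemma is_shift_NL j i L : is_shift_sp j i L (NL j i L).
Proof.
split.
  move=> v [m [mL _ ->]]; rewrite slow_shiftE; case: ifP => [_|/negbFE/eqP m0].
    exact: NL_Phi.
  exact: NL_Qm.
move=> U' hU; apply/subvP => v /memNL [a [k [aL kL k0 ->]]]; apply: memvD.
  have [->|a0] := eqVneq a 0; first by rewrite linear0 mem0v.
  have [p0|p0] := eqVneq (Phi j i a) 0; first by rewrite p0 mem0v.
  by apply: hU; exists a; rewrite slow_shiftE p0.
have [->|kn0] := eqVneq k 0; first by rewrite linear0 mem0v.
by apply: hU; exists k; rewrite slow_shiftE k0 eqxx.
Qed.

Lemma is_shift_eq j i L L' : is_shift_sp j i L L' -> L' = NL j i L.
Proof.
move=> [h1 h2]; have [h3 h4] := is_shift_NL j i L.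
by apply/eqP; rewrite eqEsubv (h2 _ h3) (h4 _ h1).
Qed.

Lemma NL_id j i L : j != i -> PC (Pm j) L -> PC (Dm j i) L -> NL j i L = L.
Proof.
move=> ji hP hD; apply/eqP; rewrite eqEsubv; apply/andP; split; apply/subvP => v.
  case/memNL => a [k [aL kL k0 ->]]; apply: memvD.
    by apply: memvD; [apply: hP | apply: hD].
  by rewrite QmE; apply: memvB => //; apply: hP.
move=> vL; apply/memNL.
have qL : Qm j v \in L by rewrite QmE; apply: memvB => //; apply: hP.
have pqL : Phi j i (Qm j v) \in L by apply: memvD; [apply: hP | apply: hD].
exists (Pm j v), (Qm j v - Phi j i (Qm j v)); split.
- exact: hP.
- exact: memvB.
- by rewrite linearB /= Phi_Phi // subrr.
rewrite Phi_av; last exact: av_Pm.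
by rewrite linearB /= Qm_Phi // subr0 Qm_hasb ?PQ //; apply: hasb_Qm.
Qed.

Lemma NL_split j i L : j != i -> PC (Pm j) (NL j i L).
Proof.
move=> ji v /memNL [a [k [aL kL k0 ->]]].
by rewrite linearD /= Pm_Phi // Pm_Qm addr0; apply: NL_Phi.
Qed.

Lemma NL_eq_St j i L : j != i -> NL j i L = L -> PC (Pm j) L /\ PC (Dm j i) L.
Proof.
move=> ji E; split; first by rewrite -E; apply: NL_split.
move=> v vL; have -> : Dm j i v = Phi j i v - Pm j v by rewrite /Phi addrC addKr.
apply: memvB; first by rewrite -E; apply: NL_Phi.
by rewrite -E; apply: NL_split => //; rewrite E.
Qed.

Lemma NL_comm j i L (A : {linear W -> W}) :
  (forall v, A (Pm j v) = Pm j (A v)) -> (forall v, A (Dm j i v) = Dm j i (A v)) ->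
  PC A L -> PC A (NL j i L).
Proof.
move=> hP hD hA v /memNL [a [k [aL kL k0 ->]]].
have hPhi : forall z : W, A (Phi j i z) = Phi j i (A z) by move=> z; rewrite /Phi linearD /= hP hD.
have hQ : forall z : W, A (Qm j z) = Qm j (A z) by move=> z; rewrite !QmE linearB /= hP.
rewrite linearD /= hPhi hQ; apply/memNL; exists (A a), (A k); split => //; try exact: hA.
by rewrite -hPhi k0 linear0.
Qed.

Lemma NL_P2 j i i0 L : j != i -> j != i0 -> PC (Dm j i0) L -> PC (Dm j i0) (NL j i L).
Proof.
move=> ji ji0 hD v /memNL [a [k [aL kL k0 ->]]].
rewrite linearD /= Dm_av ?add0r; last exact: av_Phi.
rewrite Dm_Qm -[Dm j i0 k](Phi_av i (av_Dm k ji0)).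
by apply: NL_Phi; apply: hD.
Qed.

Lemma NL_P3 j i L : j != i -> PC (Pm j) L -> PC (Dm j i) (NL j i L).
Proof.
move=> ji hP v /memNL [a [k [aL kL k0 ->]]].
rewrite linearD /= Dm_av ?add0r; last exact: av_Phi.
rewrite Dm_Qm.
have -> : Dm j i k = Phi j i (- Pm j k).
  rewrite Phi_av; last by apply: avN; apply: av_Pm.
  by apply/eqP; rewrite -addr_eq0 addrC; apply/eqP.
by apply: NL_Phi; rewrite memvN; apply: hP.
Qed.

Lemma NL_P1d (i j j' : 'I_n) L : (i < j)%N -> (j < j')%N ->
  PC (Dm j' j) L -> PC (Dm j' i) L -> PC (Dm j' j) (NL j i L).
Proof.
move=> lij ljj' hj hi.
have ji : j != i by apply/eqP => e; rewrite e ltnn in lij.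
have j'j : j' != j by apply/eqP => e; rewrite e ltnn in ljj'.
have j'i : j' != i by apply/eqP => e; rewrite e in ljj'; move: (ltn_trans lij ljj'); rewrite ltnn.
have ij := ji; rewrite eq_sym in ij.
move=> v /memNL [a [k [aL kL k0 ->]]].
rewrite linearD /= (Dm_hasb j'j (@hasb_Qm j k)) addr0.
rewrite /Phi linearD /= Dm_Dm_S2 //.
have -> : Dm j' j (Pm j a) = Dm j' j a.
  by rewrite -{2}(PQ j a) linearD /= (Dm_hasb j'j (@hasb_Qm j a)) addr0.
rewrite -(Qm_hasb (@hasb_Dm j' j a)) -linearB.
apply: NL_Qm; first by apply: memvB; [apply: hj | apply: hi].
rewrite /Phi !linearB /= (Pm_hasb (@hasb_Dm j' j a)) Dm_Dm_S3 //.
rewrite (Dm_hasb ji (@hasb_Dm j' i a)).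
by rewrite sub0r subr0 addNr.
Qed.

Lemma ltn_neq (x y : 'I_n) : (x < y)%N -> x != y.
Proof. by move=> h; apply/eqP => e; rewrite e ltnn in h. Qed.

Lemma pres (I : {set 'I_n}) (i j : 'I_n) L : (i < j)%N ->
  (forall i0 j0 : 'I_n, i0 \in I -> j0 \in I -> (i0 < j0)%N -> lex_lt (j, i) (j0, i0) ->
      PC (Pm j0) L /\ PC (Dm j0 i0) L) -> i \in I ->
  forall i0 j0 : 'I_n, i0 \in I -> j0 \in I -> (i0 < j0)%N -> lex_lt (j, i) (j0, i0) ->
      PC (Pm j0) (NL j i L) /\ PC (Dm j0 i0) (NL j i L).
Proof.
move=> lij H iI i0 j0 i0I j0I l00 lex.
have ji : j != i by rewrite eq_sym ltn_neq.
have [hP0 hD0] := H i0 j0 i0I j0I l00 lex.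
move: lex; rewrite /lex_lt /=; case/orP => [ljj0|/andP[/eqP ej lii0]]; last first.
  subst j0; split; first exact: NL_split.
  by apply: NL_P2 => //; rewrite eq_sym ltn_neq.
have j0j : j0 != j by rewrite eq_sym ltn_neq.
have j0i : j0 != i by rewrite eq_sym ltn_neq // (ltn_trans lij ljj0).
have j0i0 : j0 != i0 by rewrite eq_sym ltn_neq.
have [_ hDi] : PC (Pm j0) L /\ PC (Dm j0 i) L.
  by apply: H => //; [exact: ltn_trans lij ljj0 | rewrite /lex_lt /= ljj0].
split.
  apply: NL_comm => // v; first exact: Pm_Pm.
  by apply: Pm_Dm.
have [ei0j|i0j] := eqVneq i0 j.
  by subst i0; apply: NL_P1d.
have [ei0i|i0i] := eqVneq i0 i.
  subst i0; apply: NL_comm => // v.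
    by apply: esym; apply: Pm_Dm; rewrite // eq_sym.
  by apply: (etrans (Dm_hasb j0i (@hasb_Dm j i v))); rewrite (Dm_hasb ji (@hasb_Dm j0 i v)).
apply: NL_comm => // v.
  by apply: esym; apply: Pm_Dm; rewrite // eq_sym.
by apply: Dm_Dm_comm; rewrite // eq_sym.
Qed.

Lemma PC_lf (f : {linear W -> W}) L : reflect (PC f L) (linfun f @: L <= L)%VS.
Proof.
apply: (iffP subvP) => h.
  by move=> v vL; rewrite -(lfunE f); apply: h; apply: memv_img.
by move=> w /memv_imgP [v vL ->]; rewrite lfunE; apply: h.
Qed.

Definition splitb j L := (linfun (Pm j) @: L <= L)%VS.
Definition Stb j i L := splitb j L && (linfun (Dm j i) @: L <= L)%VS.

Lemma StbP j i L : reflect (PC (Pm j) L /\ PC (Dm j i) L) (Stb j i L).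
Proof.
by apply: (iffP andP) => -[/PC_lf h1 /PC_lf h2]; split => //; apply/PC_lf.
Qed.

Lemma moves_iff j i L : j != i -> (shift_moves j i L <-> ~~ Stb j i L).
Proof.
move=> ji; rewrite /shift_moves; split.
  move=> h; apply/negP => /StbP [h1 h2]; apply: h.
  by rewrite -{2}(NL_id ji h1 h2); apply: is_shift_NL.
move=> /negP h1 h2; apply: h1; apply/StbP; apply: NL_eq_St => //.
by rewrite -(is_shift_eq h2).
Qed.

Definition stepW (I : {set 'I_n}) L L' (i j : 'I_n) :=
  [/\ [&& i \in I, j \in I & (i < j)%N], shift_moves j i L,
        (forall i' j' : 'I_n, i' \in I -> j' \in I -> (i' < j')%N ->
           lex_lt (j, i) (j', i') -> ~ shift_moves j' i' L)
      & is_shift_sp j i L L'].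

Definition rk (I : {set 'I_n}) (x : 'I_n) := #|[set y in I | (y < x)%N]|.

Definition val I (i j : 'I_n) L := ('C(rk I j, 2) + (rk I j).-1 + rk I i + ~~ splitb j L)%N.

Lemma rk_lt I (x y : 'I_n) : x \in I -> (x < y)%N -> (rk I x < rk I y)%N.
Proof.
move=> xI lxy; apply: proper_card; apply/properP; split.
  by apply/subsetP => z; rewrite !inE => /andP[-> /ltn_trans]; apply.
by exists x; rewrite !inE ?xI ?ltnn.
Qed.

Lemma rk_ltI I (x : 'I_n) : x \in I -> (rk I x < #|I|)%N.
Proof.
move=> xI; apply: proper_card; apply/properP; split.
  by apply/subsetP => z; rewrite !inE => /andP[].
by exists x; rewrite // !inE ltnn andbF.
Qed.

Lemma arith1 (a b : nat) : (0 < a)%N -> (a < b)%N -> ('C(a, 2) + a.-1 + a < 'C(b, 2) + b.-1)%N.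
Proof.
move=> a0 ab; have := leq_bin2l 2 ab; rewrite binS bin1 => h.
have : (a <= b.-1)%N by rewrite -ltnS prednK // (leq_ltn_trans _ ab).
lia.
Qed.

Lemma shiftW_eq I L L' i j : stepW I L L' i j -> L' = NL j i L.
Proof. by case=> _ _ _; apply: is_shift_eq. Qed.



Lemma mx_St I L (i j : 'I_n) :
  (forall i' j' : 'I_n, i' \in I -> j' \in I -> (i' < j')%N ->
     lex_lt (j, i) (j', i') -> ~ shift_moves j' i' L) ->
  forall i0 j0 : 'I_n, i0 \in I -> j0 \in I -> (i0 < j0)%N -> lex_lt (j, i) (j0, i0) ->
      PC (Pm j0) L /\ PC (Dm j0 i0) L.
Proof.
move=> mx i0 j0 i0I j0I l00 lex; apply/StbP; have := mx i0 j0 i0I j0I l00 lex.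
have j0i0 : j0 != i0 by rewrite eq_sym ltn_neq.
rewrite (moves_iff L j0i0).
by case: (Stb j0 i0 L) => // h; exfalso; apply: h.
Qed.

Lemma step_dec I L L' L'' i j i' j' :
  stepW I L L' i j -> stepW I L' L'' i' j' -> (val I i' j' L' < val I i j L)%N.
Proof.
move=> hW hW'; have E := shiftW_eq hW.
case: hW => /and3P[iI jI lij] mv mx _.
case: hW' => /and3P[i'I j'I li'j'] mv' _ _.
have ji : j != i by rewrite eq_sym ltn_neq.
have j'i' : j' != i' by rewrite eq_sym ltn_neq.
have H := mx_St mx.
have H' : forall i0 j0 : 'I_n, i0 \in I -> j0 \in I -> (i0 < j0)%N -> lex_lt (j, i) (j0, i0) ->
      PC (Pm j0) L' /\ PC (Dm j0 i0) L' by rewrite E; apply: pres.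
have nS' : ~~ Stb j' i' L' by apply/moves_iff.
have sp' : splitb j L' by rewrite E; apply/PC_lf; apply: NL_split.
have nlex : ~~ lex_lt (j, i) (j', i').
  apply/negP => lex; have := H' i' j' i'I j'I li'j' lex.
  by move/StbP; rewrite (negbTE nS').
have ri'j' := rk_lt i'I li'j'.
have rij := rk_lt iI lij.
rewrite /val.
move: nlex; rewrite /lex_lt /= negb_or negb_and -!leqNgt => /andP[lj'j h2].
have [lt|ge] := ltnP j' j.
  have rjj := rk_lt j'I lt.
  have := arith1 (leq_ltn_trans (leq0n _) ri'j') rjj.
  case: (~~ splitb j' L'); case: (~~ splitb j L); lia.
have ej : j' = j by apply: val_inj; apply/eqP; rewrite eqn_leq lj'j /=; exact: ge.
subst j'; rewrite sp' /=.
move: h2; rewrite eqxx /= => li'i.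
case: (ltngtP i' i) (li'i) => // [lt|eqv] _.
  have := rk_lt i'I lt; case: (~~ splitb j L); lia.
have ei : i' = i by apply: val_inj.
subst i'.
case sp: (splitb j L); last by rewrite /=; lia.
exfalso; move/negP: nS'; apply; apply/StbP; rewrite E; split; first exact: NL_split.
by apply: NL_P3 => //; apply/PC_lf.
Qed.

Lemma val_lt I (i j : 'I_n) L : i \in I -> j \in I -> (i < j)%N ->
  (val I i j L < #|I|.-1 + 'C(#|I|, 2))%N.
Proof.
move=> iI jI lij; have rij := rk_lt iI lij; have rjI := rk_ltI jI.
rewrite /val.
have h1 := leq_bin2l 2 rjI; rewrite binS bin1 in h1.
case: (~~ splitb j L); lia.
Qed.

End Ops.

Theorem proposition3p10 (F : fieldType) (n k : nat)
    (char_not2 : (2%:R : F) != 0)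
    (L : {vspace ext F n}) (I : {set 'I_n}) :
  (forall m, m \in L -> homog k m) ->
  forall (t : nat) (Ls : nat -> {vspace ext F n}),
    Ls 0%N = L ->
    (forall s, (s < t)%N -> proc_step I (Ls s) (Ls s.+1)) ->
    (t <= #|I|.-1 + 'C(#|I|, 2))%N.
Proof.
move=> _ t Ls _ Hs.
case: t Hs => [|t] Hs; first by [].
have claim : forall d s, (s + d = t)%N -> forall i j, stepW I (Ls s) (Ls s.+1) i j ->
    (d <= val I i j (Ls s))%N.
  elim=> [|d IH] s e i j hW; first by [].
  have : (s.+1 < t.+1)%N by lia.
  move/Hs => [i' [j' hW']].
  have := IH s.+1 ltac:(lia) i' j' hW'.
  have := step_dec hW hW'.
  lia.
have [i [j hW]] := Hs 0%N (ltn0Sn _).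
have := claim t 0%N (add0n _) i j hW.
case: hW => /and3P[iI jI lij] _ _ _.
have := val_lt (Ls 0%N) iI jI lij.
by move=> h1 h2; apply: leq_ltn_trans h2 h1.
Qed.
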